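(* Let $f\colon M\to\mathbb{R}$ be a Morse function on a compact oriented smooth $n$-manifold, with Morse complex defined using a Morse–Smale metric. For any nontrivial commutative ring $\mathbb{K}$ with unity and any grading $k\in\{0,\dots,n-1\}$, $\beta^{alg}_k(f;\mathbb{K})=0$ if and only if $d_{f,k+1}=0$. Furthermore, if $\mathbb{K}$ is a field, then $\beta^{alg}_k(f;\mathbb{K})=\inf\{\beta\ge0:\ \forall\lambda\in\mathbb{R},\ \mathrm{Im}(d_{f,k+1})\cap CM^\lambda_k(f;\mathbb{K})\subset d_{f,k+1}(CM^{\lambda+\beta}_{k+1}(f;\mathbb{K}))\}$.
   Context: $CM_*(\pm f;\mathbb{K})$ are the Morse complexes (free $\mathbb{K}$-modules on critical points, the index of $p$ for $-f$ being $n-|p|_f$) with differentials $d_{\pm f}$ defined with the standard coherent orientation conventions: unstable manifolds of $f$ oriented arbitrarily (orientation of $M$ in index $n$, positive point in index $0$), stable manifolds oriented so that $W^u_f(p)\cap W^s_f(p)$ is a single positive point in the fiber product orientation, and $W^u_{-f}(p)=W^s_f(p)$. $\Pi(\sum_qa_qq,\sum_pb_pp)=\sum_pa_pb_p$ on $CM_{n-*}(-f)\times CM_*(f)$. $\Lambda\colon\mathrm{Im}(d_{-f})\times\mathrm{Im}(d_f)\to\mathbb{K}$, $\Lambda(x,y)=\Pi(x,z)$ for any $z$ with $d_fz=y$. $\ell_f(\sum_pa_pp)=\max\{f(p):a_p\ne0\}$ (with $\max\varnothing=-\infty$), $\ell_{-f}$ likewise for $-f$; $CM^\lambda_*(f;\mathbb{K})=\{y:\ell_f(y)\le\lambda\}$.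 $\beta^{alg}_k(f;\mathbb{K})=\sup(\{0\}\cup\{-\ell_{-f}(x)-\ell_f(y):x\in\mathrm{Im}(d_{-f,n-k}),y\in\mathrm{Im}(d_{f,k+1}),\Lambda(x,y)\ne0\})$. *)

(* Defs.v *)
From HB Require Import structures.
From mathcomp Require Import all_boot all_order all_algebra.
From mathcomp Require Import all_classical all_reals.
From mathcomp Require Import ereal.

Set Implicit Arguments.
Unset Strict Implicit.
Unset Printing Implicit Defensive.
Import Order.TTheory GRing.Theory Num.Theory.
Local Open Scope ring_scope.
Local Open Scope classical_set_scope.

(* P      : the (finite) set of critical points of f,
   ind p  : the Morse index |p|_f,
   fv p   : the critical value f(p),
   df p q : the integer count <d_f p, q> (signed count of f-flow lines p -> q),
   dmf q p: the integer count <d_{-f} q, p> (signed count of (-f)-flow lines q -> p).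
   Over a ring K the Morse differentials are the images of these counts. *)

Definition morse_data (R : realType) (n : nat) (P : finType)
  (ind : P -> nat) (fv : P -> R) (df dmf : P -> P -> int) : Prop :=
  [/\ (forall p, (ind p <= n)%N),
      (* d_f lowers the index by one and flow lines go down in f (Morse-Smale) *)
      (forall p q, df p q != 0 -> ind p = (ind q).+1 /\ fv q < fv p),
      (forall p r, \sum_(q : P) df p q * df q r = 0)
    & (* coherent orientations: W^u_{-f} = W^s_f, so d_{-f} is, up to a sign
         depending only on the degree, the transpose of d_f *)
      (exists eps : nat -> int, (forall k, eps k = 1 \/ eps k = -1) /\
        (forall p q, dmf q p = eps (ind q) * df p q))].

Section MorseComplex.
Variables (R : realType) (P : finType) (ind : P -> nat) (fv : P -> R).
Variable (K : comNzRingType).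

Definition in_deg (k : nat) (c : {ffun P -> K}) : Prop :=
  forall p, c p != 0 -> ind p = k.

Definition dmap (D : P -> P -> int) (c : {ffun P -> K}) : {ffun P -> K} :=
  [ffun q => \sum_(p : P) c p * (D p q)%:~R].

Definition Pi (x z : {ffun P -> K}) : K := \sum_(p : P) x p * z p.

Definition ell (g : P -> R) (c : {ffun P -> K}) : \bar R :=
  \big[maxe/-oo%E]_(p | c p != 0) (g p)%:E.

Definition ImF (df : P -> P -> int) (k : nat) (y : {ffun P -> K}) : Prop :=
  exists z, in_deg k.+1 z /\ y = dmap df z.

(* x in Im(d_{-f,n-k}); CM_{n-k}(-f) is spanned by points of f-index k *)
Definition ImMF (dmf : P -> P -> int) (k : nat) (x : {ffun P -> K}) : Prop :=
  exists w, in_deg k w /\ x = dmap dmf w.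

(* Lambda(x,y) <> 0, with Lambda(x,y) = Pi(x,z) for z with d_f z = y *)
Definition Lambda_nz (df : P -> P -> int) (k : nat) (x y : {ffun P -> K}) : Prop :=
  exists z, [/\ in_deg k.+1 z, y = dmap df z & Pi x z != 0].

Definition beta_alg (df dmf : P -> P -> int) (k : nat) : \bar R :=
  ereal_sup ([set 0%E] `|`
    [set e | exists x y, [/\ ImMF dmf k x, ImF df k y, Lambda_nz df k x y &
       e = (- ell (fun p => (- fv p)%R) x - ell fv y)%E]]).

Definition dF_zero (df : P -> P -> int) (k : nat) : Prop :=
  forall z, in_deg k.+1 z -> dmap df z = 0.

Definition CM_le (j : nat) (lam : R) (c : {ffun P -> K}) : Prop :=
  in_deg j c /\ (ell fv c <= lam%:E)%E.

Definition beta_inf (df : P -> P -> int) (k : nat) : \bar R :=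
  ereal_inf [set b%:E | b in [set b : R | 0 <= b /\
    forall (lam : R) (y : {ffun P -> K}), ImF df k y -> CM_le k lam y ->
      exists z, CM_le k.+1 (lam + b) z /\ y = dmap df z]].

End MorseComplex.

(* Main.v *)
Require Import Defs.
From HB Require Import structures.
From mathcomp Require Import all_boot all_order all_algebra.
From mathcomp Require Import all_classical all_reals.
From mathcomp Require Import ereal.
From mathcomp Require Import lra.
Set Implicit Arguments.
Unset Strict Implicit.
Unset Printing Implicit Defensive.
Import Order.TTheory GRing.Theory Num.Theory.
Local Open Scope ring_scope.

Lemma sum_nz (I : finType) (V : nmodType) (F : I -> V) :
  \sum_i F i != 0 -> exists i, F i != 0.
Proof.
case: (pickP (fun i => F i != 0)) => [i hi|hn]; first by exists i.
by rewrite big1 ?eqxx // => i _; apply/eqP/negbFE; rewrite hn.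
Qed.

Lemma reindexP (K : nmodType) (P : finType) (F : 'I_#|P| -> K) :
  \sum_i F i = \sum_(p : P) F (enum_rank p).
Proof. by rewrite (reindex enum_rank) //; exact: onW_bij (enum_rank_bij P). Qed.

Lemma separate (K : fieldType) (P : finType) (S : pred P) (D : P -> P -> int)
  (y : {ffun P -> K}) :
  (exists z : {ffun P -> K}, (forall p, z p != 0 -> S p) /\ y = dmap D z) \/
  (exists w : {ffun P -> K},
     (forall p, S p -> \sum_q w q * (D p q)%:~R = 0) /\ Pi w y != 0).
Proof.
pose vy : 'rV[K]_#|P| := \row_j y (enum_val j).
pose M : 'M[K]_(#|P|, #|P|) := \matrix_(i, j)
  (if S (enum_val i) then (D (enum_val i) (enum_val j))%:~R else 0).
case: (boolP (vy <= M)%MS) => [/submxP [u hu] | hn].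
  left; exists [ffun p => if S p then u 0 (enum_rank p) else 0]; split.
    by move=> p; rewrite ffunE; case: ifP => // _; rewrite eqxx.
  apply/ffunP => q; rewrite !ffunE.
  have /matrixP/(_ 0 (enum_rank q)) := hu.
  rewrite !mxE enum_rankK => ->; rewrite reindexP; apply eq_bigr => p _.
  rewrite !mxE !enum_rankK !ffunE; case: ifP => _; by rewrite ?mulr0 ?mul0r.
right; rewrite submxE in hn.
have [j hj] : exists j, (vy *m cokermx M) 0 j != 0.
  case: (pickP (fun j => (vy *m cokermx M) 0 j != 0)) => [j hj|hz].
    by exists j.
  case/negP: hn; apply/eqP/matrixP => i j; rewrite (ord1 i) [RHS]mxE.
  by apply/eqP/negbFE; rewrite hz.
exists [ffun q => cokermx M (enum_rank q) j]; split.
  move=> p hp; have /matrixP/(_ (enum_rank p) j) := mulmx_coker M.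
  rewrite !mxE reindexP => h; apply: eq_trans h; apply eq_bigr => q _.
  by rewrite !ffunE !mxE !enum_rankK hp mulrC.
move: hj; rewrite !mxE reindexP /Pi; congr (_ != _); apply eq_bigr => q _.
by rewrite !ffunE !mxE enum_rankK mulrC.
Qed.

Local Open Scope ereal_scope.

Lemma ell_ge (R : realType) (P : finType) (K : comNzRingType) (g : P -> R)
  (c : {ffun P -> K}) p : (c p != 0)%R -> (g p)%:E <= ell g c.
Proof. by move=> h; rewrite /ell; exact: le_bigmax_cond. Qed.

Lemma ell_le (R : realType) (P : finType) (K : comNzRingType) (g : P -> R)
  (c : {ffun P -> K}) v :
  (forall p, (c p != 0)%R -> (g p)%:E <= v) -> ell g c <= v.
Proof. by move=> h; apply/bigmax_leP; split => //; exact: leNye. Qed.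

Lemma ell_eq (R : realType) (P : finType) (K : comNzRingType) (g : P -> R)
  (c : {ffun P -> K}) : (c != 0)%R ->
  exists p, (c p != 0)%R /\ ell g c = (g p)%:E.
Proof.
move=> hc; case: (pickP (fun p => c p != 0)%R) => [p hp|hz]; last first.
  by case/negP: hc; apply/eqP/ffunP => p; rewrite ffunE; apply/eqP/negbFE; rewrite hz.
rewrite /ell; have [i hi ->] := @eq_bigmax _ _ _ -oo p (fun p => c p != 0)%R (fun p => (g p)%:E) hp
  (fun i _ => leNye _).
by exists i.
Qed.

Local Close Scope ereal_scope.

Lemma eps_mul (K : comNzRingType) (e : int) (he : e = 1 \/ e = -1) (a : K) :
  (e%:~R * a != 0) = (a != 0).
Proof. by case: he => ->; rewrite ?mul1r // mulrN1z mulN1r oppr_eq0. Qed.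

Lemma intr_nz (K : comNzRingType) (d : int) : ((d%:~R : K) != 0) -> d != 0.
Proof. by apply: contraNneq => ->. Qed.

Lemma dmf_val (P : finType) (K : comNzRingType) (ind : P -> nat)
  (df dmf : P -> P -> int) (eps : nat -> int) k
  (Heps : forall p q, dmf q p = eps (ind q) * df p q)
  (w : {ffun P -> K}) (hw : in_deg ind k w) p :
  dmap dmf w p = (eps k)%:~R * \sum_q w q * (df p q)%:~R.
Proof.
rewrite ffunE mulr_sumr; apply eq_bigr => q _; rewrite Heps.
case: (eqVneq (w q) 0) => [->|/hw ->]; first by rewrite !mul0r mulr0.
by rewrite intrM mulrCA.
Qed.

Lemma pair_eq (P : finType) (K : comNzRingType) (ind : P -> nat)
  (df dmf : P -> P -> int) (eps : nat -> int) k
  (Heps : forall p q, dmf q p = eps (ind q) * df p q)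
  (w z : {ffun P -> K}) (hw : in_deg ind k w) :
  Pi (dmap dmf w) z = (eps k)%:~R * Pi w (dmap df z).
Proof.
rewrite /Pi; under eq_bigr do rewrite (dmf_val Heps hw) -mulrA.
rewrite -mulr_sumr; congr (_ * _).
under eq_bigr do rewrite mulr_suml.
rewrite exchange_big; apply eq_bigr => q _; rewrite ffunE mulr_sumr.
by apply eq_bigr => p _; rewrite -mulrA [_ * z p]mulrC.
Qed.

Lemma Pi_nz (P : finType) (K : comNzRingType) (x z : {ffun P -> K}) :
  Pi x z != 0 -> exists p, x p != 0 /\ z p != 0.
Proof.
move=> /sum_nz [p hp]; exists p; split.
  by apply: contraNneq hp => ->; rewrite mul0r.
by apply: contraNneq hp => ->; rewrite mulr0.
Qed.

Lemma Pi0 (P : finType) (K : comNzRingType) (x : {ffun P -> K}) : Pi x 0 = 0.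
Proof. by rewrite /Pi big1 // => p _; rewrite ffunE mulr0. Qed.

Lemma dmap_deg (R : realType) (P : finType) (K : comNzRingType) (ind : P -> nat)
  (fv : P -> R) (df : P -> P -> int)
  (Hdeg : forall p q, df p q != 0 -> ind p = (ind q).+1 /\ fv q < fv p)
  k (z : {ffun P -> K}) : in_deg ind k.+1 z -> in_deg ind k (dmap df z).
Proof.
move=> hz p; rewrite ffunE => /sum_nz [q hq].
have hzq : z q != 0 by apply: contraNneq hq => ->; rewrite mul0r.
have hd : (df q p)%:~R != 0 :> K by apply: contraNneq hq => ->; rewrite mulr0.
have [h1 _] := Hdeg _ _ (intr_nz hd).
by move: (hz _ hzq); rewrite h1 => -[].
Qed.

Lemma xsupp (P : finType) (K : comNzRingType) (ind : P -> nat)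
  (df dmf : P -> P -> int) (eps : nat -> int) k
  (Heps1 : forall k, eps k = 1 \/ eps k = -1)
  (Heps : forall p q, dmf q p = eps (ind q) * df p q)
  (w : {ffun P -> K}) (hw : in_deg ind k w) p :
  dmap dmf w p != 0 -> exists q, w q != 0 /\ df p q != 0.
Proof.
rewrite (dmf_val Heps hw) (eps_mul (Heps1 k)) => /sum_nz [q hq]; exists q; split.
  by apply: contraNneq hq => ->; rewrite mul0r.
by apply: (@intr_nz K); apply: contraNneq hq => ->; rewrite mulr0.
Qed.

Theorem proposition5p6 (R : realType) (n : nat) (P : finType)
  (ind : P -> nat) (fv : P -> R) (df dmf : P -> P -> int) :
  morse_data n ind fv df dmf ->
  (forall (K : comNzRingType) (k : nat), (k < n)%N ->
     (beta_alg ind fv K df dmf k = 0%E <-> dF_zero ind K df k)) /\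
  (forall (K : fieldType) (k : nat), (k < n)%N ->
     beta_alg ind fv K df dmf k = beta_inf ind fv K df k).
Proof.
case=> Hn Hdeg Hdd [eps [Heps1 Heps]].
split.
- move=> K k _; split.
  + move=> hb z hz; apply/eqP/negPn/negP => hy.
    set y := dmap df z in hy.
    have hyd : in_deg ind k y := dmap_deg Hdeg hz.
    have [q [hyq hellq]] := ell_eq fv hy.
    pose w : {ffun P -> K} := [ffun p => if p == q then 1 else 0].
    have hw : in_deg ind k w.
      move=> p; rewrite ffunE; case: (p =P q) => [-> _|]; [exact: hyd | by rewrite eqxx].
    have hPi : Pi (dmap dmf w) z != 0.
      rewrite (pair_eq Heps _ hw) (eps_mul (Heps1 k)) /Pi (bigD1 q) //= big1 ?addr0.
        by rewrite ffunE eqxx mul1r.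
      by move=> p /negbTE hp; rewrite ffunE hp mul0r.
    have [p1 [hx1 _]] := Pi_nz hPi.
    have hx : dmap dmf w != 0 by apply: contraNneq hx1 => ->; rewrite ffunE.
    have [p2 [hx2 hell2]] := ell_eq (fun p => - fv p) hx.
    have [q' [hwq' hdq']] := xsupp Heps1 Heps hw hx2.
    have eq' : q' = q by move: hwq'; rewrite ffunE; case: (q' =P q) => // _; rewrite eqxx.
    subst q'; have [_ hlt] := Hdeg _ _ hdq'.
    have : ((fv p2 - fv q)%:E <= beta_alg ind fv K df dmf k)%E.
      apply: ereal_sup_ubound; right; exists (dmap dmf w), y; split.
      * by exists w.
      * by exists z.
      * by exists z.
      * by rewrite hell2 hellq /= opprK.
    by rewrite hb lee_fin subr_le0 => /(lt_le_trans hlt); rewrite ltxx.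
  + move=> hd; apply: le_anti; apply/andP; split.
      apply: ge_ereal_sup => e [-> //|[x [y [[w [hw ->]] _ [z [hz hyz hPi]] _]]]].
      by move: hPi; rewrite (pair_eq Heps _ hw) hd // Pi0 mulr0 eqxx.
    by apply: ereal_sup_ubound; left.
- move=> K k _; apply: le_anti; apply/andP; split.
  + apply: ge_ereal_sup => e He; apply: le_ereal_inf_tmp => _ [b [hb0 hb] <-].
    case: He => [->|[x [y [[w [hw ->]] [z0 [hz0 hy]] [z [hz hyz hPi]] ->]]]].
      by rewrite lee_fin.
    have hPi' := hPi.
    rewrite (pair_eq Heps _ hw) (eps_mul (Heps1 k)) -hyz in hPi.
    have hy0 : y != 0 by apply: contraNneq hPi => ->; rewrite Pi0.
    have [q0 [hyq0 hell0]] := ell_eq fv hy0.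
    have [p0 [hx0 _]] := Pi_nz hPi'.
    have hx : dmap dmf w != 0 by apply: contraNneq hx0 => ->; rewrite ffunE.
    have [p1 [hxp1 hell1]] := ell_eq (fun p => - fv p) hx.
    have hyd : in_deg ind k y by rewrite hyz; exact: (@dmap_deg R P K ind fv df Hdeg k z hz).
    have hcm : CM_le ind fv k (fv q0) y by split => //; rewrite hell0.
    have [z' [[hz'd hz'l] hyz']] := hb (fv q0) y (ex_intro _ z0 (conj hz0 hy)) hcm.
    have hPi2 : Pi (dmap dmf w) z' != 0.
      by rewrite (pair_eq Heps _ hw) (eps_mul (Heps1 k)) -hyz'.
    have [p [hxp hz'p]] := Pi_nz hPi2.
    have h1 := ell_ge fv hz'p.
    have h2 := ell_ge (fun p => - fv p) hxp; rewrite hell1 /= lee_fin in h2.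
    have h3 := le_trans h1 hz'l; rewrite lee_fin in h3.
    rewrite hell1 hell0 /= -EFinD lee_fin; lra.
  + have hge : (0 <= beta_alg ind fv K df dmf k)%E by apply: ereal_sup_ubound; left.
    case E: (beta_alg ind fv K df dmf k) hge => [r| |] hge; last by [].
      2: by rewrite leey.
    rewrite lee_fin in hge.
    apply: ereal_inf_lbound; exists r => //; split => // lam y hy [hyd hyl].
    set c := (lam + r)%R.
    case: (separate (fun p => (ind p == k.+1) && (fv p <= c)%R) df y)
      => [[z [hzS hyz]]|[w [hwS hPiw]]].
      exists z; split => //; split.
        by move=> p /hzS /andP [/eqP].
      by apply: ell_le => p /hzS /andP [_ h]; rewrite lee_fin.
    exfalso.
    pose w' : {ffun P -> K} := [ffun q => if ind q == k then w q else 0].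
    have hw' : in_deg ind k w'.
      by move=> q; rewrite ffunE; case: (ind q =P k) => // _; rewrite eqxx.
    have hPiw' : Pi w' y = Pi w y.
      apply eq_bigr => q _; rewrite ffunE; case: (ind q =P k) => // hq.
      case: (eqVneq (y q) 0) => [->|/hyd //]; by rewrite !mulr0.
    have [z [hz hyz]] := hy.
    have hPi : Pi (dmap dmf w') z != 0.
      by rewrite (pair_eq Heps _ hw') (eps_mul (Heps1 k)) -hyz hPiw'.
    have hy0 : y != 0 by apply: contraNneq hPiw => ->; rewrite Pi0.
    have [q0 [hyq0 hell0]] := ell_eq fv hy0.
    have [p0 [hx0 _]] := Pi_nz hPi.
    have hx : dmap dmf w' != 0 by apply: contraNneq hx0 => ->; rewrite ffunE.
    have [p1 [hxp1 hell1]] := ell_eq (fun p => - fv p) hx.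
    have hc : (c < fv p1)%R.
      rewrite ltNge; apply/negP => hle.
      have [q [hwq hdq]] := xsupp Heps1 Heps hw' hxp1.
      have hp1 : ind p1 = k.+1 by have [-> _] := Hdeg _ _ hdq; rewrite (hw' _ hwq).
      move: hxp1; rewrite (dmf_val Heps hw') (eps_mul (Heps1 k)).
      suff -> : \sum_q w' q * (df p1 q)%:~R = \sum_q w q * (df p1 q)%:~R.
        by rewrite hwS ?eqxx // hp1 eqxx hle.
      apply eq_bigr => q' _; rewrite ffunE; case: (ind q' =P k) => // hq'.
      case: (eqVneq (df p1 q') 0) => [->|/Hdeg [h _]]; first by rewrite !mulr0z !mulr0.
      by exfalso; apply: hq'; move: h; rewrite hp1 => -[].
    have he : ((fv p1 - fv q0)%:E <= r%:E)%E.
      rewrite -E; apply: ereal_sup_ubound; right; exists (dmap dmf w'), y; split.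
      * by exists w'.
      * by exists z.
      * by exists z.
      * by rewrite hell1 hell0 /= opprK.
    rewrite hell0 lee_fin in hyl; rewrite lee_fin in he.
    move: hc hyl he; rewrite /c; clear -hge => hc hyl he; lra.
Qed.
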